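(* Let $E$ be a finite directed graph and let $A$ be $KE$ or $L_K(E)$ with its standard filtration $\mathcal{F}$. Let $t(A,\mathcal{F})=(\dim(A),\mathrm{GKdim}(A),\mathrm{h}_{\mathrm{alg}}(A))$. Then exactly one of the following holds: (1) $t(A,\mathcal{F})=(k,0,0)$ for some $k<\infty$; (2) $t(A,\mathcal{F})=(\infty,l,0)$ for some $l<\infty$; (3) $t(A,\mathcal{F})=(\infty,\infty,m)$ for some $m<\infty$.
   Context: A finite directed graph $E=(E^0,E^1,s,r)$ has finitely many vertices and edges, with source and range maps $s,r:E^1\to E^0$. Paths are finite sequences $e_1\cdots e_n$ of edges with $r(e_i)=s(e_{i+1})$; vertices are paths of length $0$. The path algebra $KE$ over a field $K$ has basis all paths with concatenation product (zero when not composable); its standard filtration $V_n$ is the span of paths of length $\le n$. The Leavitt path algebra $L_K(E)$ is the $K$-algebra generated by $E^0\cup E^1\cup\{e^*:e\in E^1\}$ subject to: $vw=\delta_{v,w}v$ for vertices; $s(e)e=e=er(e)$ and $r(e)e^*=e^*=e^*s(e)$; $e^*f=\delta_{e,f}r(e)$ for $e,f\in E^1$; $\sum_{s(e)=v}ee^*=v$ for every vertex $v$ with $0<|s^{-1}(v)|<\infty$. Its standard filtration $W_n$ is the span of elements $\lambda\mu^*$ with $\lambda,\mu$ paths and $l(\lambda)+l(\mu)\le n$. For a filtration $\{V_n\}$ of an algebra $A$, $\mathrm{h}_{\mathrm{alg}}(A)=0$ if $A$ is finite-dimensional and $\limsup_n\frac1n\log\dim(V_n/V_{n-1})$ otherwise.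 $\mathrm{GKdim}(A)=\limsup_{n}\log\dim(V^n)/\log n$ for a finite-dimensional generating subspace $V$, where $V^n$ is the span of products of at most $n$ elements of $V$. *)

(* Defs.v *)
From HB Require Import structures.
From mathcomp Require Import all_boot all_order all_algebra.
From mathcomp Require Import all_classical all_reals all_analysis.

Set Implicit Arguments.
Unset Strict Implicit.
Unset Printing Implicit Defensive.
Import Order.TTheory GRing.Theory Num.Theory.
Local Open Scope ring_scope.

Section LinAlg.
Variables (K : fieldType) (A : lmodType K).

Definition span (S : A -> Prop) : A -> Prop :=
  fun x => exists (n : nat) (c : 'I_n -> K) (a : 'I_n -> A),
      (forall i, S (a i)) /\ x = \sum_(i < n) c i *: a i.

Definition lin_indep (n : nat) (a : 'I_n -> A) : Prop :=
  forall c : 'I_n -> K, \sum_(i < n) c i *: a i = 0 -> forall i, c i = 0.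

Definition dim_is (W : A -> Prop) (d : nat) : Prop :=
  exists a : 'I_d -> A, (forall i, W (a i)) /\ lin_indep a /\
     (forall x, W x -> span (fun y => exists i, y = a i) x).

Definition findim (W : A -> Prop) : Prop := exists d, dim_is W d.

(* the dimension of W as a natural number (meaningful when findim W) *)
Definition dimn (W : A -> Prop) : nat :=
  match pselect (findim W) with
  | left H => projT1 (cid H)
  | right _ => 0%N
  end.

End LinAlg.

Definition is_Kalg (K : fieldType) (A : lmodType K) (mul : A -> A -> A) : Prop :=
  (forall x y z, mul x (mul y z) = mul (mul x y) z) /\
  (forall x y z, mul (x + y) z = mul x z + mul y z) /\
  (forall x y z, mul x (y + z) = mul x y + mul x z) /\
  (forall (a : K) x y, mul (a *: x) y = a *: mul x y) /\
  (forall (a : K) x y, mul x (a *: y) = a *: mul x y).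

Definition is_alg_hom (K : fieldType) (A B : lmodType K)
   (mulA : A -> A -> A) (mulB : B -> B -> B) (f : A -> B) : Prop :=
  (forall (a : K) x y, f (a *: x + y) = a *: f x + f y) /\
  (forall x y, f (mulA x y) = mulB (f x) (f y)).

Section Invariants.
Variables (R : realType) (K : fieldType) (A : lmodType K) (mul : A -> A -> A).

(* V^n : span of the products of at most n (and at least one) elements of V *)
Definition powsp (V : A -> Prop) (n : nat) : A -> Prop :=
  span (fun y => exists (x : A) (l : seq A), (size l < n)%N /\ V x /\
          (forall z, z \in l -> V z) /\ y = foldl mul x l).

(* GKdim computed with the finite-dimensional generating subspace V *)
Definition GKdim (V : A -> Prop) : \bar R :=
  limn_esup (fun n => ((ln ((dimn (powsp V n))%:R : R)) / ln (n%:R : R))%:E).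

(* dim (F n / F (n-1)), with F (-1) = 0 *)
Definition grdim (F : nat -> A -> Prop) (n : nat) : nat :=
  (dimn (F n) - (if n is m.+1 then dimn (F m) else 0))%N.

Definition halg (F : nat -> A -> Prop) : \bar R :=
  if `[< findim (fun _ : A => True) >] then 0%E
  else limn_esup (fun n => if (0 < grdim F n)%N
                           then ((ln ((grdim F n)%:R : R)) / (n%:R : R))%:E
                           else -oo%E).

(* t(A,F) = (dim A, GKdim A, h_alg A); GKdim computed with V = F 1 *)
Definition trichotomy (F : nat -> A -> Prop) : Prop :=
  let full := fun _ : A => True in
  let T1 := exists k : nat, dim_is full k /\ GKdim (F 1%N) = 0%E /\ halg F = 0%E in
  let T2 := ~ findim full /\ (exists l : R, GKdim (F 1%N) = l%:E) /\ halg F = 0%E in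
  let T3 := ~ findim full /\ GKdim (F 1%N) = +oo%E /\ (exists m : R, halg F = m%:E) in
  (T1 \/ T2 \/ T3) /\ ~ (T1 /\ T2) /\ ~ (T1 /\ T3) /\ ~ (T2 /\ T3).

End Invariants.

(* A (raw) path is a pair (v, [:: e1; ...; en]) : it is a path when     *)
(* n = 0 (the vertex v) or s e1 = v and r e_i = s e_(i+1).              *)
Section Graphs.
Variables (V Ed : finType) (s r : Ed -> V).

Definition gpath := (V * seq Ed)%type.

Definition is_gpath (p : gpath) : bool :=
  (if p.2 is e :: _ then s e == p.1 else true) &&
  sorted (fun e f => r e == s f) p.2.

Definition glen (p : gpath) : nat := size p.2.
Definition gsrc (p : gpath) : V := p.1.
Definition grng (p : gpath) : V := last p.1 (map r p.2).
Definition gcat (p q : gpath) : gpath := (p.1, p.2 ++ q.2).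

Section PathAlg.
Variables (K : fieldType) (A : lmodType K) (mul : A -> A -> A) (b : gpath -> A).

Definition IsPathAlgebra : Prop :=
  is_Kalg mul /\
  (forall (n : nat) (p : 'I_n -> gpath), injective p ->
      (forall i, is_gpath (p i)) -> lin_indep (fun i => b (p i))) /\
  (forall x, span (fun y => exists p, is_gpath p /\ y = b p) x) /\
  (forall p q, is_gpath p -> is_gpath q ->
      mul (b p) (b q) = if grng p == gsrc q then b (gcat p q) else 0).

Definition path_filtration (n : nat) : A -> Prop :=
  span (fun y => exists p, is_gpath p /\ (glen p <= n)%N /\ y = b p).
End PathAlg.

Section Leavitt.
Variables (K : fieldType).

(* the Leavitt path algebra relations for elements pv v, se e (= e), ss e (= e^* ) *)
Definition LeavittRel (B : lmodType K) (mul : B -> B -> B)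
    (pv : V -> B) (se ss : Ed -> B) : Prop :=
  (forall v w, mul (pv v) (pv w) = if v == w then pv v else 0) /\
  (forall e, mul (pv (s e)) (se e) = se e /\ mul (se e) (pv (r e)) = se e) /\
  (forall e, mul (pv (r e)) (ss e) = ss e /\ mul (ss e) (pv (s e)) = ss e) /\
  (forall e f, mul (ss e) (se f) = if e == f then pv (r e) else 0) /\
  (forall v, (exists e, s e == v) ->
      \sum_(e | s e == v) mul (se e) (ss e) = pv v).

Inductive lgen := LVert of V | LEdge of Ed | LGhost of Ed.

Variables (A : lmodType K) (mul : A -> A -> A) (pv : V -> A) (se ss : Ed -> A).

Definition lgen_val (g : lgen) : A :=
  match g with LVert v => pv v | LEdge e => se e | LGhost e => ss e end.

(* (A, mul, pv, se, ss) is L_K(E): the K-algebra generated by the vertices,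
   edges and ghost edges subject to the Leavitt relations, i.e. it is
   generated by them, satisfies the relations, and every family satisfying
   the relations in any K-algebra is the image of an algebra homomorphism. *)
Definition IsLeavitt : Prop :=
  is_Kalg mul /\ LeavittRel mul pv se ss /\
  (forall x, span (fun y => exists (g : lgen) (w : seq lgen),
                     y = foldl mul (lgen_val g) (map lgen_val w)) x) /\
  (forall (B : lmodType K) (mulB : B -> B -> B) (qv : V -> B) (qe qs : Ed -> B),
     is_Kalg mulB -> LeavittRel mulB qv qe qs ->
     exists f : A -> B, is_alg_hom mul mulB f /\
       (forall v, f (pv v) = qv v) /\ (forall e, f (se e) = qe e) /\
       (forall e, f (ss e) = qs e)).

Definition path_el (p : gpath) : A := foldl mul (pv p.1) (map se p.2).
(* mu^* = fn^* ... f1^*  (w if n = 0) *)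
Definition ghost_el (p : gpath) : A := foldr mul (pv p.1) (map ss (rev p.2)).

Definition leavitt_filtration (n : nat) : A -> Prop :=
  span (fun y => exists lam mu, is_gpath lam /\ is_gpath mu /\
          (glen lam + glen mu <= n)%N /\ y = mul (path_el lam) (ghost_el mu)).
End Leavitt.

End Graphs.

(* Main.v *)
Require Import Defs.
From HB Require Import structures.
From mathcomp Require Import all_boot all_order all_algebra.
From mathcomp Require Import all_classical all_reals all_analysis.
From mathcomp Require Import ring lra zify.
Set Implicit Arguments. Unset Strict Implicit. Unset Printing Implicit Defensive.
Import Order.TTheory GRing.Theory Num.Theory.
Local Open Scope ring_scope.
Local Notation span := Defs.span.

Section LA.
Variables (K : fieldType) (A : lmodType K).
Implicit Types (S T W : A -> Prop).

Definition cons_fam (X : Type) n (a0 : X) (a : 'I_n -> X) : 'I_n.+1 -> X :=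
  fun i => match unlift ord0 i with Some j => a j | None => a0 end.
Lemma cons_fam0 (X : Type) n (a0 : X) (a : 'I_n -> X) : cons_fam a0 a ord0 = a0.
Proof. by rewrite /cons_fam unlift_none. Qed.
Lemma cons_famS (X : Type) n (a0 : X) (a : 'I_n -> X) i :
  cons_fam a0 a (lift ord0 i) = a i.
Proof. by rewrite /cons_fam liftK. Qed.

Lemma span_in S x : S x -> span S x.
Proof.
move=> Sx; exists 1%N, (fun _ => 1), (fun _ => x); split => //.
by rewrite big_ord1 scale1r.
Qed.

Lemma span0 S : span S 0.
Proof. by exists 0%N, (fun _ => 0), (fun _ => 0); split; [case|rewrite big_ord0]. Qed.

Lemma span_cons S c s x : S s -> span S x -> span S (c *: s + x).
Proof.
move=> Ss [n [d [a [Ha ->]]]].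
exists n.+1, (cons_fam c d), (cons_fam s a); split.
  by move=> i; rewrite /cons_fam; case: unlift.
by rewrite big_ord_recl cons_fam0 cons_fam0; congr (_ + _); apply: eq_bigr => i _;
  rewrite !cons_famS.
Qed.

Lemma span_ind S (P : A -> Prop) : P 0 ->
  (forall c s x, S s -> P x -> P (c *: s + x)) -> forall x, span S x -> P x.
Proof.
move=> P0 Pc x [n [c [a [Ha ->]]]]; elim: n c a Ha => [|n IH] c a Ha.
  by rewrite big_ord0.
rewrite big_ord_recl; apply: Pc => //; exact: (IH (fun i => c (lift ord0 i))).
Qed.

Lemma span_add S x y : span S x -> span S y -> span S (x + y).
Proof.
move=> sx sy; move: x sx; apply: span_ind; first by rewrite add0r.
by move=> c s x Ss sxy; rewrite -addrA; apply: span_cons.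
Qed.

Lemma span_scale S a x : span S x -> span S (a *: x).
Proof.
move: x; apply: span_ind; first by rewrite scaler0; exact: span0.
by move=> c s x Ss sx; rewrite scalerDr scalerA; apply: span_cons.
Qed.

Lemma span_opp S x : span S x -> span S (- x).
Proof. by move=> sx; rewrite -scaleN1r; apply: span_scale. Qed.

Lemma span_sub S T : (forall y, S y -> span T y) -> forall x, span S x -> span T x.
Proof.
move=> ST; apply: span_ind; first exact: span0.
by move=> c s x Ss sx; apply: span_add => //; apply: span_scale; apply: ST.
Qed.

Lemma span_sum S n (c : 'I_n -> K) (a : 'I_n -> A) :
  (forall i, span S (a i)) -> span S (\sum_(i < n) c i *: a i).
Proof.
move=> Ha; elim/big_ind: _ => //; [exact: span0|exact: span_add|].
by move=> i _; apply: span_scale.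
Qed.

Definition rng (X : Type) (a : X -> A) : A -> Prop := fun y => exists i, y = a i.

Lemma span_rangeP N (a : 'I_N -> A) x :
  span (rng a) x -> exists c : 'I_N -> K, x = \sum_i c i *: a i.
Proof.
move: x; apply: span_ind.
  by exists (fun _ => 0); rewrite big1 // => i _; rewrite scale0r.
move=> c s x [i0 ->] [d ->].
exists (fun i => d i + (if i == i0 then c else 0)).
under [RHS]eq_bigr do rewrite scalerDl.
rewrite big_split /= addrC; congr (_ + _).
rewrite (bigD1 i0) //= eqxx big1 ?addr0 // => j /negbTE ->; exact: scale0r.
Qed.

Lemma steinitz d N (x : 'I_d -> A) (a : 'I_N -> A) :
  lin_indep x -> (forall j, span (rng a) (x j)) -> (d <= N)%N.
Proof.
move=> indep sp.
have [f Hf] := choice (fun j => span_rangeP (sp j)).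
pose C : 'M[K]_(d, N) := \matrix_(j, i) f j i.
rewrite leqNgt; apply/negP => ltNd.
have kC : kermx C != 0.
  rewrite -mxrank_eq0 mxrank_ker subn_eq0 -ltnNge.
  exact: (leq_ltn_trans (rank_leq_col C) ltNd).
have [[j0 k0] Hjk] : exists p : 'I_d * 'I_d, kermx C p.1 p.2 != 0.
  case: (pselect (exists p : 'I_d * 'I_d, kermx C p.1 p.2 != 0)) => [//|H].
  exfalso; move/negP: kC; apply; apply/eqP/matrixP => j k; rewrite [RHS]mxE.
  apply: contrapT => Hn; apply: H; exists (j, k); apply/eqP; exact: Hn.
pose u := row j0 (kermx C).
have uC : u *m C = 0 by apply/sub_kermxP; exact: row_sub.
have := indep (fun j => u 0 j).
have -> : \sum_(j < d) u 0 j *: x j = 0.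
  transitivity (\sum_(i < N) (u *m C) 0 i *: a i); last first.
    by rewrite uC big1 // => i _; rewrite mxE scale0r.
  under eq_bigr do rewrite Hf scaler_sumr.
  rewrite exchange_big /=; apply: eq_bigr => i _.
  rewrite mxE scaler_suml; apply: eq_bigr => j _.
  by rewrite scalerA [C j i]mxE.
move=> /(_ erefl k0) /eqP; rewrite mxE; exact/negP.
Qed.


Lemma lin_indep_cons d (x : 'I_d -> A) y :
  lin_indep x -> ~ span (rng x) y -> lin_indep (cons_fam y x).
Proof.
move=> indep ny c.
rewrite big_ord_recl cons_fam0.
under eq_bigr do rewrite cons_famS.
move=> H.
have c0 : c ord0 = 0.
  apply: contrapT => /eqP c0; apply: ny.
  have -> : y = \sum_(i < d) (- (c ord0)^-1 * c (lift ord0 i)) *: x i.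
    under eq_bigr do rewrite -scalerA.
    rewrite -scaler_sumr.
    have -> : \sum_(i < d) c (lift ord0 i) *: x i = - (c ord0 *: y).
      by apply/eqP; rewrite -addr_eq0 addrC H.
    by rewrite scalerN scaleNr opprK scalerA mulVf // scale1r.
  apply: span_sum => i; apply: span_in; by exists i.
rewrite c0 scale0r add0r in H.
have := indep _ H => Hc i.
case: (unliftP ord0 i) => [j ->|->] //; exact: Hc.
Qed.

Lemma dimnP W : findim W -> dim_is W (dimn W).
Proof. by rewrite /dimn; case: pselect => // H _; exact: (projT2 (cid H)). Qed.

Lemma findim_sub N (a : 'I_N -> A) W :
  (forall x, W x -> span (rng a) x) -> findim W /\ (dimn W <= N)%N.
Proof.
move=> WS.
have bnd : forall d (x : 'I_d -> A), (forall j, W (x j)) -> lin_indep x -> (d <= N)%N.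
  by move=> d x Wx ix; apply: steinitz ix _ => j; apply: WS.
have fW : findim W.
  pose P d := `[< exists x : 'I_d -> A, (forall j, W (x j)) /\ lin_indep x >].
  have P0 : exists d, P d.
    exists 0%N; apply/asboolP; exists (fun _ => 0); split; first by case.
    by move=> c _; case.
  have Pb : forall d, P d -> (d <= N)%N.
    by move=> d /asboolP [x [Wx ix]]; exact: bnd Wx ix.
  case: (ex_maxnP P0 Pb) => dm /asboolP [x [Wx ix]] dmax.
  exists dm, x; split => //; split => // y Wy.
  apply: contrapT => ny.
  have : P dm.+1.
    apply/asboolP; exists (cons_fam y x); split.
      by move=> i; rewrite /cons_fam; case: unlift.
    exact: lin_indep_cons.
  by move/dmax; rewrite ltnn.
split => //.
have [b [Wb [ib _]]] := dimnP fW.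
exact: bnd Wb ib.
Qed.

Lemma findim_subT (I : finType) (f : I -> A) W :
  (forall x, W x -> span (rng f) x) -> findim W /\ (dimn W <= #|I|)%N.
Proof.
move=> WS; apply: (findim_sub (a := fun k => f (enum_val k))) => x Wx.
apply: span_sub (WS x Wx) => _ [i ->]; apply: span_in.
by exists (enum_rank i); rewrite enum_rankK.
Qed.

Lemma dimn_mono W W' : (forall x, W x -> W' x) -> findim W' ->
  findim W /\ (dimn W <= dimn W')%N.
Proof.
move=> WW' fW'; have [b [Wb [ib sb]]] := dimnP fW'.
by apply: (findim_sub (a := b)) => x /WW' /sb.
Qed.

Lemma dimn_ge W m (x : 'I_m -> A) : findim W -> (forall j, W (x j)) ->
  lin_indep x -> (m <= dimn W)%N.
Proof.
move=> fW Wx ix; have [b [Wb [ib sb]]] := dimnP fW.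
exact: steinitz ix (fun j => sb _ (Wx j)).
Qed.

End LA.

Section AN.
Variable R : realType.
Implicit Types (u : nat -> \bar R).
Local Open Scope ereal_scope.

Lemma esup_le u a N : (forall n, (N <= n)%N -> u n <= a) -> limn_esup u <= a.
Proof.
move=> uN; rewrite limn_esup_lim; apply: lime_le; first exact: is_cvg_esups.
near=> n; apply: ge_ereal_sup => _ [k /= nk <-]; apply: uN.
by apply: leq_trans nk; near: n; exists N.
Unshelve. all: by end_near. Qed.

Lemma esup_ge u a : (forall N, exists n, (N <= n)%N /\ a <= u n) -> a <= limn_esup u.
Proof.
move=> H; rewrite limn_esup_lim; apply: lime_ge; first exact: is_cvg_esups.
apply: nearW => m; have [n [mn an]] := H m; apply: le_trans an _.
by apply: ereal_sup_ubound; exists n.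
Qed.

Lemma esup_lt u a : limn_esup u < a -> exists N, forall n, (N <= n)%N -> u n < a.
Proof.
rewrite limn_esup_lim.
have -> : limn (esups u) = ereal_inf (range (esups u)).
  by apply/cvg_lim => //; exact: cvg_esups_inf.
move=> /ereal_inf_lt [_ [N _ <-] lt]; exists N => n Nn.
apply: le_lt_trans lt; apply: ereal_sup_ubound; by exists n.
Qed.

Lemma esup_le0 u : (forall e : R, (0 < e)%R -> exists N, forall n, (N <= n)%N -> u n <= e%:E) ->
  limn_esup u <= 0.
Proof.
move=> H; apply/lee_addgt0Pr => e e0; rewrite add0e.
have [N HN] := H e e0; exact: esup_le HN.
Qed.

Local Close Scope ereal_scope.

Lemma ln_nat_ge0 (k : nat) : 0 <= ln (k%:R : R).
Proof. by case: k => [|k]; [rewrite ln0 | rewrite ln_ge0 // ler1n]. Qed.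

Lemma lnratio_small (k : nat) (e : R) : 0 < e ->
  exists N, forall n, (N <= n)%N -> ln (k%:R : R) / ln (n%:R) <= e.
Proof.
move=> e0; pose M := expR (ln (k%:R : R) / e).
exists (maxn 2 (Num.bound M)) => n; rewrite geq_max => /andP [n2 nb].
have M0 : 0 < M by exact: expR_gt0.
have nM : M <= n%:R.
  apply: ltW; apply: lt_le_trans (archi_boundP (ltW M0)) _; by rewrite ler_nat.
have lnpos : 0 < ln (n%:R : R) by apply: ln_gt0; rewrite ltr1n.
have : ln M <= ln (n%:R : R).
  by rewrite ler_ln // posrE // (lt_le_trans M0 nM).
rewrite /M expRK ler_pdivrMr // => h.
by rewrite ler_pdivrMr // mulrC.
Qed.

Lemma lnlin (L e : R) : 0 < L -> 0 < e ->
  exists N, forall n, (N <= n)%N -> L * ln ((n.+2)%:R) <= e * n%:R.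
Proof.
move=> L0 e0; pose M := 4 * L / e.
have M0 : 0 < M by rewrite /M divr_gt0 // mulr_gt0.
pose X := 2 * L * `|ln M| / e.
exists (maxn 2 (Num.bound X)) => n; rewrite geq_max => /andP [n2 nb].
have X0 : 0 <= X by rewrite /X; apply: divr_ge0 (ltW e0); apply: mulr_ge0 => //; apply: mulr_ge0 => //; exact: ltW.
have nX : X < n%:R.
  apply: lt_le_trans (archi_boundP X0) _; by rewrite ler_nat.
have n2R : 2 <= (n%:R : R) by rewrite (ler_nat R 2).
have np : 0 < ((n.+2)%:R : R) by rewrite ltr0n.
have q0 : 0 < (n.+2)%:R / M by rewrite divr_gt0.
have eqln : ln ((n.+2)%:R : R) = ln M + ln ((n.+2)%:R / M).
  rewrite -lnM ?posrE //; congr ln; rewrite mulrC -mulrA mulVf ?mulr1 //.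
  exact: lt0r_neq0.
have lq := ln_sublinear q0.
have LM : L * ((n.+2)%:R / M) = e / 4 * (n.+2)%:R.
  by rewrite /M; field; rewrite (lt0r_neq0 e0) (lt0r_neq0 L0).
have Xe : X * e = 2 * L * `|ln M| by rewrite /X; field; exact: lt0r_neq0.
have nXe : X * e < n%:R * e by rewrite ltr_pM2r.
have lnM_le : ln M <= `|ln M| by exact: ler_norm.
rewrite eqln mulrDr.
have : L * ln ((n.+2)%:R / M) <= L * ((n.+2)%:R / M) by rewrite ler_pM2l // ltW.
have e2 : (n.+2)%:R = n%:R + 2 :> R by rewrite -addn2 natrD.
rewrite LM e2 => h.
have : L * ln M <= L * `|ln M| by rewrite ler_pM2l.
move: Xe nXe; nra.
Qed.

End AN.

Section GK.
Variables (R : realType) (K : fieldType) (A : lmodType K) (mul : A -> A -> A).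

Lemma GKdim_ge0 V : (0 <= GKdim R mul V)%E.
Proof.
apply: esup_ge => N; exists N; split => //.
by rewrite lee_fin divr_ge0 // ln_nat_ge0.
Qed.

Lemma GKdim_bnd V k : (forall m, (dimn (powsp mul V m) <= k)%N) -> GKdim R mul V = 0%E.
Proof.
move=> Hk; apply: le_anti; rewrite GKdim_ge0 andbT.
apply: esup_le0 => e e0; have [N HN] := lnratio_small k e0.
exists (maxn N 2) => n; rewrite geq_max => /andP [Nn n2].
rewrite lee_fin; apply: le_trans (HN n Nn).
have lnpos : 0 < ln (n%:R : R) by apply: ln_gt0; rewrite ltr1n.
rewrite ler_pM2r ?invr_gt0 //.
case: (posnP (dimn (powsp mul V n))) => [->|dp]; first by rewrite ln0 // ln_nat_ge0.
rewrite ler_ln ?posrE ?ltr0n ?ler_nat //; exact: leq_trans dp (Hk n).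
Qed.
End GK.

Section Abstract.
Variables (R : realType) (K : fieldType) (A : lmodType K) (mul : A -> A -> A)
  (F : nat -> A -> Prop).
Hypothesis Hmono : forall n x, F n x -> F n.+1 x.
Hypothesis Hexh : forall x, exists n, F n x.
Hypothesis Hfin : forall n, findim (F n).
Variable C : nat.
Hypothesis C1 : (1 <= C)%N.
Hypothesis Hbound : forall n, (dimn (F n) <= C ^ n.+1)%N.
Hypothesis Hpow1 : forall n x, F n x -> powsp mul (F 1) n.+2 x.
Hypothesis Hpow2 : forall m, exists N, forall x, powsp mul (F 1) m x -> F N x.

Lemma Fle n m x : (n <= m)%N -> F n x -> F m x.
Proof.
move=> /subnK <-; elim: (m - n)%N => // k IH /IH; rewrite addSn; exact: Hmono.
Qed.

Lemma dle n m : (n <= m)%N -> (dimn (F n) <= dimn (F m))%N.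
Proof. by move=> nm; apply: (dimn_mono (fun x => @Fle n m x nm) (Hfin m)).2. Qed.

Lemma powfin m : findim (powsp mul (F 1) m).
Proof. by have [N HN] := Hpow2 m; exact: (dimn_mono HN (Hfin N)).1. Qed.

Lemma dD n : (dimn (F n) <= dimn (powsp mul (F 1) n.+2))%N.
Proof. exact: (dimn_mono (@Hpow1 n) (powfin _)).2. Qed.

Lemma io : ~ findim (fun _ : A => True) ->
  forall N, exists n, (N <= n)%N /\ (0 < grdim F n)%N.
Proof.
move=> nf N; apply: contrapT => H.
have H' : forall n, (N <= n)%N -> (dimn (F n.+1) <= dimn (F n))%N.
  move=> n Nn; have : ~ (0 < grdim F n.+1)%N.
    by move=> g; apply: H; exists n.+1; split => //; exact: leqW.
  by rewrite /grdim subn_gt0 => /negP; rewrite -leqNgt.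
have HN : forall k, (dimn (F (k + N)) <= dimn (F N))%N.
  elim => // k IH; rewrite addSn; exact: leq_trans (H' _ (leq_addl _ _)) IH.
apply: nf.
have [b [Fb [ib _]]] := dimnP (Hfin N).
suff : forall x, (fun _ : A => True) x -> span (rng b) x.
  by move/findim_sub => [].
move=> x _; apply: contrapT => nx.
have [m Fm] := Hexh x.
have FM : F (m + N) x by apply: Fle Fm; exact: leq_addr.
have Fc : forall j, F (m + N) (cons_fam x b j).
  move=> j; rewrite /cons_fam; case: unlift => [i|//].
  by apply: Fle (Fb i); exact: leq_addl.
have := dimn_ge (Hfin (m + N)) Fc (lin_indep_cons ib nx).
by move=> /leq_trans /(_ (HN m)); rewrite ltnn.
Qed.

Let hseq := fun n => if (0 < grdim F n)%N
                     then ((ln ((grdim F n)%:R : R)) / (n%:R : R))%:E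
                     else -oo%E.

Lemma hlower : ~ findim (fun _ : A => True) -> (0 <= limn_esup hseq)%E.
Proof.
move=> nf; apply: esup_ge => N; have [n [Nn g]] := io nf N; exists n; split => //.
by rewrite /hseq g lee_fin divr_ge0 // ln_nat_ge0.
Qed.

Lemma lng_le n : (0 < grdim F n)%N -> ln ((grdim F n)%:R : R) <= ln ((dimn (F n))%:R).
Proof.
move=> g; have gd : (grdim F n <= dimn (F n))%N by rewrite /grdim leq_subr.
by rewrite ler_ln ?posrE ?ltr0n ?ler_nat // (leq_trans g gd).
Qed.

Lemma hupper3 : (limn_esup hseq <= (2 * ln (C%:R : R))%:E)%E.
Proof.
apply: (@esup_le _ _ _ 1%N) => n n1; rewrite /hseq; case: ifP => g; last by rewrite leNye.
rewrite lee_fin.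
have lnC0 : 0 <= ln (C%:R : R) by exact: ln_nat_ge0.
have np : 0 < (n%:R : R) by rewrite ltr0n.
have h1 : ln ((grdim F n)%:R : R) <= ln (C%:R : R) * (n.+1)%:R.
  apply: le_trans (lng_le g) _.
  have dp : (0 < dimn (F n))%N by apply: leq_trans g _; rewrite /grdim leq_subr.
  rewrite mulr_natr -lnXn ?ltr0n // -natrX ler_ln ?posrE ?ltr0n ?ler_nat //.
    by rewrite expn_gt0 C1.
rewrite ler_pdivrMr //.
have n1R : 1 <= (n%:R : R) by rewrite ler1n.
have e1 : (n.+1)%:R = n%:R + 1 :> R by rewrite -addn1 natrD.
rewrite e1 in h1; nra.
Qed.

Lemma hupper2 (r : R) : GKdim R mul (F 1) = r%:E -> (limn_esup hseq <= 0)%E.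
Proof.
move=> Gr.
have r0 : 0 <= r by rewrite -lee_fin -Gr GKdim_ge0.
have [N1 HN1] : exists N, forall n, (N <= n)%N ->
    (((ln ((dimn (powsp mul (F 1) n))%:R : R)) / ln (n%:R : R))%:E < (r + 1)%:E)%E.
  by apply: esup_lt; rewrite /GKdim in Gr; rewrite Gr lte_fin ltrDl.
apply: esup_le0 => e e0.
have [N2 HN2] := @lnlin R (r + 1) e (ltr_wpDl r0 ltr01) e0.
exists (maxn (maxn N1 N2) 1) => n; rewrite !geq_max => /andP [/andP [n1 n2] n0].
rewrite /hseq; case: ifP => g; last by rewrite leNye.
rewrite lee_fin.
have np : 0 < (n%:R : R) by rewrite ltr0n.
rewrite ler_pdivrMr //.
apply: le_trans (HN2 n n2).
have h := HN1 n.+2 (leq_trans n1 (leqW (leqW (leqnn n)))).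
rewrite lte_fin in h.
have lnpos : 0 < ln ((n.+2)%:R : R) by apply: ln_gt0; rewrite ltr1n.
rewrite ltr_pdivrMr // in h.
apply: le_trans (lng_le g) _; apply: ltW; apply: le_lt_trans h.
have dp : (0 < dimn (F n))%N by apply: leq_trans g _; rewrite /grdim leq_subr.
rewrite ler_ln ?posrE ?ltr0n ?ler_nat ?dD //; exact: leq_trans dp (dD n).
Qed.

Theorem abstract_trich : trichotomy R mul F.
Proof.
rewrite /trichotomy.
case: (pselect (findim (fun _ : A => True))) => [ff|nf].
  have [k Hk] := ff.
  have G0 : GKdim R mul (F 1) = 0%E.
    apply: (@GKdim_bnd _ _ _ _ _ k) => m.
    have [b [_ [_ sb]]] := Hk.
    exact: (findim_sub (a := b) (W := powsp mul (F 1) m) (fun x _ => sb x I)).2.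
  have h0 : halg R F = 0%E by rewrite /halg asboolT.
  split; first by left; exists k.
  split; first by case=> _ [].
  by split; case=> _ [].
have hE : halg R F = limn_esup hseq by rewrite /halg asboolF.
have G0 := GKdim_ge0 R mul (F 1).
case eG : (GKdim R mul (F 1)) => [r| |].
- have h0 : halg R F = 0%E.
    by rewrite hE; apply: le_anti; rewrite hlower // (hupper2 eG).
  split; first by right; left; split => //; split => //; exists r.
  split; first by case=> -[k [dk _]] [nf' _]; apply: nf'; exists k.
  split; first by case=> -[k [dk _]] [nf' _]; apply: nf'; exists k.
  by case=> _ [_ [] ].
- have [m hm] : exists m : R, halg R F = m%:E.
    rewrite hE; have := hlower nf; have := hupper3.
    case: (limn_esup hseq) => [x| |] //; by exists x.
  split; first by right; right; split => //; split => //; exists m.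
  split; first by case=> -[k [dk _]] [nf' _]; apply: nf'; exists k.
  split; first by case=> -[k [dk _]] [nf' _]; apply: nf'; exists k.
  by case=> -[_ [[l]]].
- by rewrite eG in G0.
Qed.
End Abstract.

Section Gen.
Variables (K : fieldType) (A : lmodType K).
Implicit Types (S T : A -> Prop).

Lemma span_closed S x : span (span S) x -> span S x.
Proof. exact: span_sub. Qed.

Lemma mono_le (G : nat -> A -> Prop) : (forall n x, G n x -> G n.+1 x) ->
  forall n m x, (n <= m)%N -> G n x -> G m x.
Proof.
move=> Hm n m x /subnK <-; elim: (m - n)%N => // k IH /IH; rewrite addSn; exact: Hm.
Qed.

Lemma exh_gen (G : nat -> A -> Prop) (T : A -> Prop) :
  (forall n x, G n x -> G n.+1 x) -> (forall n x, span (G n) x -> G n x) ->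
  (forall y, T y -> exists n, G n y) -> forall x, span T x -> exists n, G n x.
Proof.
move=> Hm Hc HT; apply: span_ind.
  by exists 0%N; apply: Hc; exact: span0.
move=> c y x Ty [n Gx]; have [k Gy] := HT y Ty.
exists (maxn n k); apply: Hc; eapply span_cons.
  exact: (mono_le Hm (leq_maxr n k) Gy).
by apply: span_in; exact: (mono_le Hm (leq_maxl n k) Gx).
Qed.

Variable mul : A -> A -> A.
Hypothesis Hk : is_Kalg mul.

Lemma kmul0l y : mul 0 y = 0.
Proof.
have [_ [_ [_ [HZl _]]]] := Hk.
by have := HZl 0 0 y; rewrite !scale0r.
Qed.

Lemma kmul0r y : mul y 0 = 0.
Proof.
have [_ [_ [_ [_ HZr]]]] := Hk.
by have := HZr 0 y 0; rewrite !scale0r.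
Qed.

Lemma mul_spanl S T x y : span S x -> (forall z, S z -> span T (mul z y)) ->
  span T (mul x y).
Proof.
have [_ [HDl [_ [HZl _]]]] := Hk.
move=> sx H; move: x sx; apply: span_ind; first by rewrite kmul0l; exact: span0.
move=> c z x Sz sx; rewrite HDl HZl; apply: span_add => //; apply: span_scale; exact: H.
Qed.

Lemma mul_spanr S T x y : span S y -> (forall z, S z -> span T (mul x z)) ->
  span T (mul x y).
Proof.
have [_ [_ [HDr [_ HZr]]]] := Hk.
move=> sy H; move: y sy; apply: span_ind; first by rewrite kmul0r; exact: span0.
move=> c z y Sz sy; rewrite HDr HZr; apply: span_add => //; apply: span_scale; exact: H.
Qed.

Lemma foldl_assoc x y l : foldl mul (mul x y) l = mul x (foldl mul y l).
Proof.
have [HA _] := Hk.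
by elim: l y => //= z l IH y; rewrite -HA IH.
Qed.

Lemma foldr_mulr l x y : mul (foldr mul x l) y = foldr mul (mul x y) l.
Proof.
have [HA _] := Hk.
by elim: l => //= z l IH; rewrite -HA IH.
Qed.

Lemma foldr_zero l : foldr mul 0 l = 0.
Proof. by elim: l => //= z l ->; rewrite kmul0r. Qed.

End Gen.

Lemma cardbound (a e n : nat) : (a * e.+1 ^ n <= (a.+1 * e.+1) ^ n.+1)%N.
Proof.
rewrite expnMn; apply: leq_mul.
  by rewrite expnS; apply: leq_trans (leqnSn a) _; apply: leq_pmulr; rewrite expn_gt0.
by rewrite expnS; apply: leq_pmull.
Qed.

Lemma cardbound1 (a e n : nat) :
  (a * e.+1 ^ n <= ((a.+1 * e.+1) ^ 2) ^ n.+1)%N.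
Proof.
apply: leq_trans (cardbound a e n) _; rewrite expnAC.
have h : forall m, (0 < m)%N -> (m <= m ^ 2)%N by move=> m m0; rewrite (expnS m 1) expn1 leq_pmulr.
by apply: h; rewrite expn_gt0 muln_gt0.
Qed.

Lemma cardbound2 (a e n : nat) :
  ((a * e.+1 ^ n) ^ 2 <= ((a.+1 * e.+1) ^ 2) ^ n.+1)%N.
Proof. by rewrite expnAC leq_exp2r // cardbound. Qed.

Section GraphCommon.
Variables (V Ed : finType) (s r : Ed -> V).

Lemma gpath_rcons v es e : is_gpath s r (v, rcons es e) =
  is_gpath s r (v, es) && (grng r (v, es) == s e).
Proof.
case: es => [|e1 es]; first by rewrite /is_gpath /= eq_sym !andbT.
rewrite /is_gpath /grng /= rcons_path last_map.
by rewrite !andbA.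
Qed.

Lemma enc n (es : seq Ed) : (size es <= n)%N -> exists t : n.-tuple (option Ed), pmap id t = es.
Proof.
move=> h.
have sz : size (take n (map Some es ++ nseq n None)) == n.
  by rewrite size_takel // size_cat size_map size_nseq leq_addl.
exists (Tuple sz) => /=.
rewrite take_cat size_map ltnNge h /= pmap_cat take_nseq ?leq_subr //.
have -> : pmap id (nseq (n - size es) (@None Ed)) = [::] by elim: (n - size es)%N.
by rewrite cats0; elim: es {h sz} => //= e es ->.
Qed.

End GraphCommon.

Section PathInst.
Variables (V Ed : finType) (s r : Ed -> V).
Variables (K : fieldType) (A : lmodType K) (mul : A -> A -> A) (b : gpath V Ed -> A).
Hypothesis HP : IsPathAlgebra s r mul b.
Local Notation F := (path_filtration s r b).

Let Hk : is_Kalg mul. Proof. by case: HP. Qed.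
Let Hmul : forall p q, is_gpath s r p -> is_gpath s r q ->
      mul (b p) (b q) = if grng r p == gsrc q then b (gcat p q) else 0.
Proof. by case: HP => _ [_ []]. Qed.
Let Hsp : forall x, span (fun y => exists p, is_gpath s r p /\ y = b p) x.
Proof. by case: HP => _ [_ []]. Qed.

Lemma gpath1 e : is_gpath s r (s e, [:: e]).
Proof. by rewrite /is_gpath /= eqxx. Qed.

Lemma pmono n x : F n x -> F n.+1 x.
Proof.
apply: span_sub => _ [p [gp [lp ->]]]; apply: span_in; exists p; split => //.
by split => //; exact: leqW.
Qed.

Lemma pclosed n x : span (F n) x -> F n x.
Proof. exact: span_closed. Qed.

Lemma pexh x : exists n, F n x.
Proof.
apply: (exh_gen pmono pclosed) (Hsp x) => _ [p [gp ->]].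
by exists (glen p); apply: span_in; exists p.
Qed.

Lemma pbound n : findim (F n) /\ (dimn (F n) <= #|{: V * n.-tuple (option Ed)}|)%N.
Proof.
apply: (findim_subT (f := fun i : V * n.-tuple (option Ed) => b (i.1, pmap id i.2))).
apply: span_sub => _ [[v es] [gp [lp ->]]].
have [t ht] := enc lp.
by apply: span_in; exists (v, t); rewrite /= ht.
Qed.

Lemma bfold v es : is_gpath s r (v, es) ->
  b (v, es) = foldl mul (b (v, [::])) (map (fun e => b (s e, [:: e])) es).
Proof.
elim/last_ind: es => [//|es e IH].
rewrite gpath_rcons => /andP [g1 g2].
rewrite map_rcons foldl_rcons -IH // Hmul // ?gpath1 //.
by rewrite /gsrc /= g2 /gcat /= cats1.
Qed.

Lemma ppow1 n x : F n x -> powsp mul (F 1) n.+2 x.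
Proof.
apply: span_sub => _ [[v es] [gp [lp ->]]]; apply: span_in.
exists (b (v, [::])), (map (fun e => b (s e, [:: e])) es); split.
  by rewrite size_map; apply: leq_trans lp _; rewrite leqW.
split; first by apply: span_in; exists (v, [::]); split => //; rewrite /is_gpath.
split; last exact: bfold.
move=> z /mapP [e _ ->]; apply: span_in; exists (s e, [:: e]); split => //.
exact: gpath1.
Qed.

Lemma Fmul a x y : F a x -> F 1 y -> F (a + 1) (mul x y).
Proof.
move=> Fx Fy; apply: (mul_spanl Hk Fx) => _ [p [gp [lp ->]]].
apply: (mul_spanr Hk Fy) => _ [q [gq [lq ->]]].
rewrite Hmul //; case: ifP => [e|_]; last exact: span0.
apply: span_in; exists (gcat p q); split; last first.
  by split => //; rewrite /glen size_cat leq_add.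
case: p gp lp e => [v es] gp lp; case: q gq lq => [w [|e' [|e'' qs]]] gq lq //= e.
  by rewrite /gcat /= cats0.
rewrite /gcat /= cats1 gpath_rcons gp /=.
move: gq; rewrite /is_gpath /= andbT => /eqP ->; exact: e.
Qed.

Lemma ppow2 m : exists N, forall x, powsp mul (F 1) m x -> F N x.
Proof.
exists m; move=> x; apply: span_sub => _ [x0 [l [sl [Fx0 [Fl ->]]]]].
have H : forall l k x0, F k x0 -> (forall z, z \in l -> F 1 z) ->
    F (k + size l) (foldl mul x0 l).
  elim => [|z l1 IH] k y Fy Fz /=; first by rewrite addn0.
  rewrite -addSnnS -addn1; apply: IH; first by apply: Fmul => //; apply: Fz; exact: mem_head.
  by move=> w wl; apply: Fz; rewrite in_cons wl orbT.
apply: (mono_le pmono _ (H l 1%N x0 Fx0 Fl)).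
by rewrite add1n.
Qed.

Theorem path_trich (R : realType) : trichotomy R mul F.
Proof.
apply: (@abstract_trich R K A mul F pmono pexh (fun n => (pbound n).1)
          ((#|V|.+1 * #|Ed|.+1) ^ 2)%N).
- by rewrite expn_gt0 muln_gt0.
- move=> n; apply: leq_trans (pbound n).2 _.
  by rewrite card_prod card_tuple card_option; apply: cardbound1.
- exact: ppow1.
- exact: ppow2.
Qed.
End PathInst.

Section LeavInst.
Variables (V Ed : finType) (s r : Ed -> V).
Variables (K : fieldType) (A : lmodType K) (mul : A -> A -> A)
  (pv : V -> A) (se ss : Ed -> A).
Hypothesis HL : IsLeavitt s r mul pv se ss.
Local Notation W := (leavitt_filtration s r mul pv se ss).
Local Notation PE := (path_el mul pv se).
Local Notation GE := (ghost_el mul pv ss).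
Local Notation LV := (lgen_val pv se ss).

Let Hk : is_Kalg mul. Proof. by case: HL. Qed.
Let HA : forall x y z, mul x (mul y z) = mul (mul x y) z. Proof. by case: Hk. Qed.
Let R1 : forall v w, mul (pv v) (pv w) = if v == w then pv v else 0.
Proof. by case: HL => _ [[]]. Qed.
Let R2 : forall e, mul (pv (s e)) (se e) = se e /\ mul (se e) (pv (r e)) = se e.
Proof. by case: HL => _ [[_ []]]. Qed.
Let R3 : forall e, mul (pv (r e)) (ss e) = ss e /\ mul (ss e) (pv (s e)) = ss e.
Proof. by case: HL => _ [[_ [_ []]]]. Qed.
Let R4 : forall e f, mul (ss e) (se f) = if e == f then pv (r e) else 0.
Proof. by case: HL => _ [[_ [_ [_ []]]]]. Qed.
Let Hgen : forall x, span (fun y => exists (g : lgen V Ed) (w : seq (lgen V Ed)),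
                     y = foldl mul (LV g) (map LV w)) x.
Proof. by case: HL => _ [_ []]. Qed.

Lemma se_rv e w : mul (se e) (pv w) = if r e == w then se e else 0.
Proof.
rewrite -{1}(R2 e).2 -HA R1; case: ifP => _; first by rewrite (R2 e).2.
exact: (kmul0r Hk).
Qed.

Lemma pe_rv lam w : mul (PE lam) (pv w) = if grng r lam == w then PE lam else 0.
Proof.
case: lam => v es; elim/last_ind: es => [|es e IH].
  by rewrite /path_el /grng /= R1.
rewrite /path_el /grng /=. rewrite !map_rcons foldl_rcons last_rcons -HA se_rv.
by case: ifP => _ //; rewrite (kmul0r Hk).
Qed.

Lemma pv_ss w f : mul (pv w) (ss f) = if w == r f then ss f else 0.
Proof.
case: eqP => [->|/eqP ne]; first exact: (R3 f).1.
by rewrite -(R3 f).1 HA R1 (negbTE ne) (kmul0l Hk).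
Qed.

Lemma pv_se w e : mul (pv w) (se e) = if w == s e then se e else 0.
Proof.
case: eqP => [->|/eqP ne]; first exact: (R2 e).1.
by rewrite -(R2 e).1 HA R1 (negbTE ne) (kmul0l Hk).
Qed.

Lemma ge_rv mu u : mul (GE mu) (pv u) = if gsrc mu == u then GE mu else 0.
Proof.
case: mu => w fs; rewrite /ghost_el /gsrc /= (foldr_mulr Hk) R1.
by case: ifP => _ //; rewrite (foldr_zero Hk).
Qed.

Lemma ge_ss w fs f : mul (GE (w, fs)) (ss f) =
  if w == r f then GE (s f, f :: fs) else 0.
Proof.
rewrite /ghost_el /= (foldr_mulr Hk) pv_ss rev_cons map_rcons foldr_rcons (R3 f).2.
by case: ifP => _ //; rewrite (foldr_zero Hk).
Qed.

Lemma ge_se w f1 fs e : is_gpath s r (w, f1 :: fs) ->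
  mul (GE (w, f1 :: fs)) (se e) = if f1 == e then GE (r f1, fs) else 0.
Proof.
rewrite /is_gpath /= => /andP [/eqP sf _].
rewrite /ghost_el /= rev_cons map_rcons foldr_rcons -sf (R3 f1).2 (foldr_mulr Hk) R4.
by case: ifP => _ //; rewrite (foldr_zero Hk).
Qed.

Lemma pe_se lam e : mul (PE lam) (se e) =
  if grng r lam == s e then PE (lam.1, rcons lam.2 e) else 0.
Proof.
case: ifP => h; first by rewrite /path_el /= map_rcons foldl_rcons.
by rewrite -(R2 e).1 HA pe_rv h (kmul0l Hk).
Qed.

Lemma gen_in lam mu n : is_gpath s r lam -> is_gpath s r mu ->
  (glen lam + glen mu <= n)%N -> W n (mul (PE lam) (GE mu)).
Proof. by move=> gl gm ln; apply: span_in; exists lam, mu. Qed.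

Lemma Wstep a x g : W a x -> W a.+1 (mul x (LV g)).
Proof.
move=> Wx; apply: (mul_spanl Hk Wx) => _ [[v es] [[w fs] [gl [gm [ln ->]]]]].
rewrite -HA; case: g => [u|e|f] /=.
- rewrite ge_rv; case: ifP => _; last by rewrite (kmul0r Hk); exact: span0.
  by apply: gen_in => //; exact: leqW.
- case: fs gm ln => [|f1 fs] gm ln.
    rewrite /ghost_el /= pv_se; case: ifP => [/eqP ws|_]; last by rewrite (kmul0r Hk); exact: span0.
    rewrite pe_se; case: ifP => [/eqP h|_]; last exact: span0.
    have E : PE (v, rcons es e) = mul (PE (v, rcons es e)) (GE (r e, [::])).
      by rewrite /ghost_el /= pe_rv /grng /= map_rcons last_rcons eqxx.
    rewrite /= E.
    apply: (@gen_in _ (r e, [::])) => //.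
      by rewrite gpath_rcons gl /= h.
    by rewrite /glen /= size_rcons addn0; rewrite /glen /= addn0 in ln.
  rewrite ge_se //; case: ifP => _; last by rewrite (kmul0r Hk); exact: span0.
  apply: gen_in => //.
    move: gm; rewrite /is_gpath /=; case: fs {ln} => [|f2 fs] //= /andP [_ /andP [h1 h2]].
    by rewrite eq_sym h1.
  by apply: leqW; apply: leq_trans ln; rewrite /glen /= leq_add2l.
- rewrite ge_ss; case: ifP => [/eqP wr|_]; last by rewrite (kmul0r Hk); exact: span0.
  apply: gen_in => //.
    move: gm; rewrite /is_gpath /= eqxx /=; case: fs {ln} => [|f2 fs] //= /andP [h1 h2].
    by rewrite -wr eq_sym h1.
  by rewrite /glen /= addnS ltnS.
Qed.

Lemma Wbase g : W 1 (LV g).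
Proof.
case: g => [v|e|f] /=.
- have := @gen_in (v, [::]) (v, [::]) 1 erefl erefl erefl.
  by rewrite /path_el /ghost_el /= R1 eqxx.
- have := @gen_in (s e, [:: e]) (r e, [::]) 1.
  rewrite /path_el /ghost_el /= (R2 e).1 (R2 e).2; apply => //.
  by rewrite /is_gpath /= eqxx.
- have := @gen_in (r f, [::]) (s f, [:: f]) 1.
  rewrite /path_el /ghost_el /= (R3 f).2 (R3 f).1; apply => //.
  by rewrite /is_gpath /= eqxx.
Qed.

Lemma Wmono n x : W n x -> W n.+1 x.
Proof.
apply: span_sub => _ [lam [mu [gl [gm [ln ->]]]]]; apply: span_in.
by exists lam, mu; do 3 split => //; exact: leqW.
Qed.

Lemma Wwords l k x : (forall z, z \in l -> exists g, z = LV g) -> W k x ->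
  W (k + size l) (foldl mul x l).
Proof.
elim: l k x => [|z l IH] k x Hl Wx /=; first by rewrite addn0.
have [g ->] := Hl z (mem_head _ _).
rewrite -addSnnS; apply: IH; last exact: Wstep.
by move=> y yl; apply: Hl; rewrite in_cons yl orbT.
Qed.

Lemma Wexh x : exists n, W n x.
Proof.
apply: (exh_gen Wmono (fun n => @span_closed _ _ _) ) (Hgen x) => _ [g [w ->]].
exists (1 + size (map LV w))%N; apply: Wwords; last exact: Wbase.
elim: w => //= g0 w IH z; rewrite in_cons => /orP [/eqP ->|/IH //].
by exists g0.
Qed.

Lemma mul_fold P y L : mul P (foldr mul y L) = foldl mul P (rcons L y).
Proof. by elim: L P => //= z L IH P; rewrite -IH HA. Qed.

Lemma gen_fold v es w fs : mul (PE (v, es)) (GE (w, fs)) =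
  foldl mul (pv v) (map se es ++ rcons (map ss (rev fs)) (pv w)).
Proof. by rewrite foldl_cat /ghost_el /= mul_fold. Qed.

Lemma gen_list_gen es fs w z : z \in map se es ++ rcons (map ss (rev fs)) (pv w) ->
  exists g, z = LV g.
Proof.
rewrite mem_cat mem_rcons in_cons => /orP [/mapP [e _ ->]|/orP [/eqP ->|/mapP [f _ ->]]].
- by exists (LEdge V e).
- by exists (LVert Ed w).
- by exists (LGhost V f).
Qed.

Lemma Wpow1 n x : W n x -> powsp mul (W 1) n.+2 x.
Proof.
apply: span_sub => _ [[v es] [[w fs] [gl [gm [ln ->]]]]]; apply: span_in.
rewrite gen_fold.
exists (pv v), (map se es ++ rcons (map ss (rev fs)) (pv w)); split.
  rewrite size_cat size_rcons !size_map size_rev addnS ltnS. exact: ln.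
split; first exact: (Wbase (LVert Ed v)).
split => // z /gen_list_gen [g ->]; exact: Wbase.
Qed.

Lemma WmulW1 a x y : W a x -> W 1 y -> W (a + 3) (mul x y).
Proof.
move=> Wx Wy; apply: (mul_spanr Hk Wy) => _ [[v es] [[w fs] [gl [gm [ln ->]]]]].
rewrite gen_fold -(foldl_assoc Hk).
have := Wwords (l := map se es ++ rcons (map ss (rev fs)) (pv w)) (@gen_list_gen es fs w)
  (Wstep (LVert Ed v) Wx).
apply: (mono_le Wmono).
rewrite /glen /= in ln; rewrite size_cat size_rcons !size_map size_rev.
move: ln; set p := size es; set q := size fs; lia.
Qed.

Lemma Wpow2 m : exists N, forall x, powsp mul (W 1) m x -> W N x.
Proof.
exists (3 * m)%N; move=> x; apply: span_sub => _ [x0 [l [sl [Wx0 [Wl ->]]]]].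
have H : forall l k y, W k y -> (forall z, z \in l -> W 1 z) ->
    W (k + 3 * size l) (foldl mul y l).
  elim => [|z l1 IH] k y Wy Wz /=; first by rewrite muln0 addn0.
  rewrite mulnS addnA; apply: IH; first by apply: WmulW1 => //; apply: Wz; exact: mem_head.
  by move=> u ul; apply: Wz; rewrite in_cons ul orbT.
apply: (mono_le Wmono _ (H l 1%N x0 Wx0 Wl)).
move: sl; set p := size l; lia.
Qed.

Lemma Wbound n : findim (W n) /\
  (dimn (W n) <= #|{: (V * n.-tuple (option Ed)) * (V * n.-tuple (option Ed))}|)%N.
Proof.
apply: (findim_subT (f := fun i : (V * n.-tuple (option Ed)) * (V * n.-tuple (option Ed)) =>
   mul (PE (i.1.1, pmap id i.1.2)) (GE (i.2.1, pmap id i.2.2)))).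
apply: span_sub => _ [[v es] [[w fs] [gl [gm [ln ->]]]]].
have [t1 h1] := @enc _ n es (leq_trans (leq_addr _ _) ln).
have [t2 h2] := @enc _ n fs (leq_trans (leq_addl _ _) ln).
by apply: span_in; exists ((v, t1), (w, t2)); rewrite /= h1 h2.
Qed.

Theorem leavitt_trich (R : realType) : trichotomy R mul W.
Proof.
apply: (@abstract_trich R K A mul W Wmono Wexh (fun n => (Wbound n).1)
          ((#|V|.+1 * #|Ed|.+1) ^ 2)%N).
- by rewrite expn_gt0 muln_gt0.
- move=> n; apply: leq_trans (Wbound n).2 _.
  by rewrite !card_prod card_tuple card_option mulnn; apply: cardbound2.
- exact: Wpow1.
- exact: Wpow2.
Qed.
End LeavInst.

Theorem corollary5p17 (R : realType) (K : fieldType)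
  (V Ed : finType) (s r : Ed -> V) :
  (forall (A : lmodType K) (mul : A -> A -> A) (b : gpath V Ed -> A),
     IsPathAlgebra s r mul b ->
     trichotomy R mul (path_filtration s r b)) /\
  (forall (A : lmodType K) (mul : A -> A -> A) (pv : V -> A) (se ss : Ed -> A),
     IsLeavitt s r mul pv se ss ->
     trichotomy R mul (leavitt_filtration s r mul pv se ss)).
Proof.
split.
  by move=> A mul b HP; exact: (@path_trich V Ed s r K A mul b HP R).
by move=> A mul pv se ss HL; exact: (@leavitt_trich V Ed s r K A mul pv se ss HL R).
Qed.
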